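(* Let $S\subset\mathbb R^2$ be a finite set of $n>4$ points, none of which lies at the center $O$ of SED$(S)$. If $S$ is Pre-regular, then the cyclic order of the points of $S$ around $O$ coincides with the cyclic order of the points of $S$ around the center of the supporting polygon of $S$.
   Context: SED$(S)$ is the smallest closed disk containing $S$, SEC$(S)$ its boundary circle, and $O$ its center. $S$ is \emph{Pre-regular} if there is a regular $n$-gon $P$ (the supporting polygon) such that for every pair of adjacent edges of $P$, one of the two edges contains exactly two points of $S$ (possibly at its endpoints) and the relative interior of the other edge contains no point of $S$. *)

(* Defs.v *)
From Stdlib Require Import Reals List.
Import ListNotations.
Open Scope R_scope.

Definition point : Type := (R * R)%type.

Definition dist2 (p q : point) : R :=
  (fst p - fst q) ^ 2 + (snd p - snd q) ^ 2.

Definition is_SED_center (S : list point) (O : point) : Prop :=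
  exists r : R, 0 <= r /\
    (forall p, In p S -> dist2 O p <= r * r) /\
    (forall (c : point) (r' : R), 0 <= r' ->
        (forall p, In p S -> dist2 c p <= r' * r') -> r <= r').

(* k-th vertex of the regular n-gon with center C, circumradius Rad, phase phi. *)
Definition vtx (C : point) (Rad phi : R) (n k : nat) : point :=
  (fst C + Rad * cos (phi + 2 * PI * INR k / INR n),
   snd C + Rad * sin (phi + 2 * PI * INR k / INR n)).

Definition on_segment (u v p : point) : Prop :=
  exists t : R, 0 <= t <= 1 /\
    p = (fst u + t * (fst v - fst u), snd u + t * (snd v - snd u)).

Definition on_open_segment (u v p : point) : Prop :=
  exists t : R, 0 < t < 1 /\
    p = (fst u + t * (fst v - fst u), snd u + t * (snd v - snd u)).

(* edge k of the polygon is [vtx k, vtx (k+1)] (indices mod n, by periodicity) *)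
Definition edge_has_exactly_two (S : list point) (C : point) (Rad phi : R)
    (n k : nat) : Prop :=
  exists p q, In p S /\ In q S /\ p <> q /\
    on_segment (vtx C Rad phi n k) (vtx C Rad phi n (Datatypes.S k)) p /\
    on_segment (vtx C Rad phi n k) (vtx C Rad phi n (Datatypes.S k)) q /\
    (forall x, In x S ->
       on_segment (vtx C Rad phi n k) (vtx C Rad phi n (Datatypes.S k)) x ->
       x = p \/ x = q).

Definition edge_relint_empty (S : list point) (C : point) (Rad phi : R)
    (n k : nat) : Prop :=
  forall x, In x S ->
    ~ on_open_segment (vtx C Rad phi n k) (vtx C Rad phi n (Datatypes.S k)) x.

Definition supporting_polygon (S : list point) (C : point) (Rad phi : R) : Prop :=
  0 < Rad /\
  forall k : nat, (k < length S)%nat ->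
    (edge_has_exactly_two S C Rad phi (length S) k /\
     edge_relint_empty S C Rad phi (length S) (Datatypes.S k)) \/
    (edge_has_exactly_two S C Rad phi (length S) (Datatypes.S k) /\
     edge_relint_empty S C Rad phi (length S) k).

Definition pre_regular (S : list point) : Prop :=
  exists C Rad phi, supporting_polygon S C Rad phi.

(* Strict counterclockwise cyclic order around X: sweeping counterclockwise
   around X starting from the direction of a, one meets the direction of b
   strictly before the direction of c (and strictly after a). *)
Definition ccw_between (X a b c : point) : Prop :=
  exists ta tb tc ra rb rc : R,
    0 < ra /\ 0 < rb /\ 0 < rc /\
    a = (fst X + ra * cos ta, snd X + ra * sin ta) /\
    b = (fst X + rb * cos tb, snd X + rb * sin tb) /\
    c = (fst X + rc * cos tc, snd X + rc * sin tc) /\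
    ta < tb /\ tb < tc /\ tc < ta + 2 * PI.

(* Main.v *)
Require Import Defs.
From Stdlib Require Import Reals List Lra Lia Psatz Classical ZArith ClassicalEpsilon Arith.
Open Scope R_scope.
Open Scope nat_scope.

Fixpoint nsum (f : nat -> nat) (n : nat) : nat :=
  match n with 0 => 0 | S m => nsum f m + f m end.

Lemma nsum_le f g n : (forall j, j < n -> f j <= g j) -> nsum f n <= nsum g n.
Proof. induction n; simpl; intros; auto. specialize (IHn (fun j H' => H j (Nat.lt_lt_succ_r _ _ H'))). specialize (H n). lia. Qed.

Lemma nsum_add f g n : nsum (fun j => f j + g j) n = nsum f n + nsum g n.
Proof. induction n; simpl; lia. Qed.

Lemma nsum_shift f n : nsum (fun j => f (S j)) n + f 0 = nsum f n + f n.
Proof. induction n; simpl; lia. Qed.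

Lemma nsum_const1 n : nsum (fun _ => 1) n = n.
Proof. induction n; simpl; lia. Qed.

Lemma nsum_zero f n : (forall j, j < n -> f j = 0) -> nsum f n = 0.
Proof. induction n; simpl; intros; auto. rewrite IHn by auto. rewrite H; lia. Qed.

Lemma cyc_count (c : nat -> nat) n : 1 <= n -> c n = c 0 ->
  (forall j, 1 <= j <= n -> 1 <= c j \/ (c j = 0 /\ 2 <= c (j - 1))) ->
  n <= nsum c n.
Proof.
  intros Hn Hper Hloc.
  set (z := fun j => if Nat.eqb (c j) 0 then 1 else 0).
  set (w := fun j => if Nat.leb 2 (c j) then 1 else 0).
  assert (H1 : nsum (fun j => 1 + w j) n <= nsum (fun j => c j + z j) n).
  { apply nsum_le. intros j _. unfold z, w. destruct (c j) as [|[|k]]; simpl; lia. }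
  rewrite !nsum_add, nsum_const1 in H1.
  assert (H2 : nsum (fun j => z (S j)) n <= nsum w n).
  { apply nsum_le. intros j Hj. destruct (Hloc (S j)) as [A|[A B]]; [lia| |].
    - unfold z. destruct (Nat.eqb_spec (c (S j)) 0). lia. unfold w. destruct (Nat.leb 2 (c j)); lia.
    - unfold z, w. rewrite A. replace (S j - 1) with j in B by lia.
      destruct (Nat.leb_spec 2 (c j)); simpl; lia. }
  pose proof (nsum_shift z n) as H3.
  assert (z n = z 0) by (unfold z; rewrite Hper; auto).
  lia.
Qed.

Definition count {A} (b : A -> bool) (L : list A) := length (filter b L).

Lemma nsum_indic {A} (b : nat -> A -> bool) (x : A) n :
  (forall j1 j2, j1 < n -> j2 < n -> b j1 x = true -> b j2 x = true -> j1 = j2) ->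
  nsum (fun j => if b j x then 1 else 0) n <= 1.
Proof.
  induction n; simpl; intros H; auto.
  destruct (b n x) eqn:E.
  - rewrite nsum_zero; [lia|]. intros j Hj. destruct (b j x) eqn:E2; auto.
    specialize (H j n ltac:(lia) ltac:(lia) E2 E). lia.
  - rewrite Nat.add_0_r. apply IHn. intros; apply H; auto; lia.
Qed.

Lemma disj_count {A} (b : nat -> A -> bool) n (L : list A) :
  (forall x, In x L -> forall j1 j2, j1 < n -> j2 < n -> b j1 x = true -> b j2 x = true -> j1 = j2) ->
  nsum (fun j => count (b j) L) n <= length L /\
  ((exists x, In x L /\ forall j, j < n -> b j x = false) -> nsum (fun j => count (b j) L) n < length L).
Proof.
  induction L as [|x L IH]; intros H.
  - simpl. rewrite nsum_zero by auto. split; auto. intros (x & [] & _).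
  - assert (E' : forall j, count (b j) (x :: L) = (if b j x then 1 else 0) + count (b j) L).
    { intro j. unfold count. simpl. destruct (b j x); simpl; auto. }
    assert (E2 : nsum (fun j => count (b j) (x :: L)) n =
                nsum (fun j => (if b j x then 1 else 0) + count (b j) L) n).
    { clear. induction n; simpl; auto. rewrite IHn. f_equal. unfold count; simpl. destruct (b n x); auto. }
    rewrite E2, nsum_add.
    destruct IH as [IH1 IH2]. { intros; eapply H; eauto. right; auto. }
    pose proof (nsum_indic b x n (H x (or_introl eq_refl))).
    simpl. split; [lia|].
    intros (y & [<-|Hy] & Hf).
    + rewrite nsum_zero. lia. intros j Hj; rewrite Hf; auto.
    + specialize (IH2 (ex_intro _ y (conj Hy Hf))). lia.
Qed.

Lemma count_ge1 {A} (b : A -> bool) L p : In p L -> b p = true -> 1 <= count b L.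
Proof. intros. unfold count. destruct (filter b L) eqn:E; simpl; [|lia].
  assert (In p (filter b L)) by (apply filter_In; auto). rewrite E in H1; destruct H1. Qed.

Lemma count_ge2 {A} (b : A -> bool) L p q : In p L -> In q L -> p <> q -> b p = true -> b q = true -> 2 <= count b L.
Proof.
  intros. unfold count.
  assert (Hp : In p (filter b L)) by (apply filter_In; auto).
  assert (Hq : In q (filter b L)) by (apply filter_In; auto).
  destruct (filter b L) as [|x [|y l]]; simpl in *; try lia; try tauto.
  destruct Hp as [<-|[]]; destruct Hq as [<-|[]]; tauto.
Qed.

Open Scope R_scope.

Lemma fin_eps (L : list point) (Q : point -> R -> Prop) :
  (forall p, In p L -> exists g, 0 < g /\ forall e, 0 < e <= g -> Q p e) ->
  exists g, 0 < g /\ forall e, 0 < e <= g -> forall p, In p L -> Q p e.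
Proof.
  induction L as [|x L IH]; intros H.
  - exists 1. split; [lra|]. intros e _ p [].
  - destruct IH as (g1 & G1 & H1). { intros; apply H; right; auto. }
    destruct (H x (or_introl eq_refl)) as (g2 & G2 & H2).
    exists (Rmin g1 g2). split. { apply Rmin_pos; auto. }
    intros e He p [<-|Hp].
    + apply H2. pose proof (Rmin_r g1 g2). lra.
    + apply H1; auto. pose proof (Rmin_l g1 g2). lra.
Qed.

Lemma fin_max (L : list point) (f : point -> R) B :
  (forall p, In p L -> f p < B) -> exists M, M < B /\ forall p, In p L -> f p <= M.
Proof.
  induction L as [|x L IH]; intros H.
  - exists (B - 1). split; [lra|]. intros p [].
  - destruct IH as (M & HM & H1). { intros; apply H; right; auto. }
    exists (Rmax M (f x)). split.
    + apply Rmax_lub_lt; auto. apply H; left; auto.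
    + intros p [<-|Hp]. apply Rmax_r. eapply Rle_trans; [apply H1; auto| apply Rmax_l].
Qed.

Lemma dist2_shift (O p : point) d1 d2 e :
  dist2 (fst O + e * d1, snd O + e * d2) p =
  dist2 O p - 2 * e * (d1 * (fst p - fst O) + d2 * (snd p - snd O)) + e * e * (d1 * d1 + d2 * d2).
Proof. unfold dist2. simpl. ring. Qed.

Lemma dist2_nonneg p q : 0 <= dist2 p q.
Proof. unfold dist2. apply Rplus_le_le_0_compat; apply pow2_ge_0. Qed.

Lemma PL (Sl : list point) O r d1 d2 : 0 <= r -> Sl <> nil ->
  (forall p, In p Sl -> dist2 O p <= r * r) ->
  (forall (c : point) (r' : R), 0 <= r' -> (forall p, In p Sl -> dist2 c p <= r' * r') -> r <= r') ->
  (forall p, In p Sl -> dist2 O p < r * r \/ d1 * (fst p - fst O) + d2 * (snd p - snd O) > 0) ->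
  False.
Proof.
  intros Hr Hne Hcov Hmin Hp.
  set (nd := d1 * d1 + d2 * d2).
  assert (Hnd : 0 <= nd) by (unfold nd; nra).
  destruct (fin_eps Sl (fun p e => dist2 (fst O + e * d1, snd O + e * d2) p < r * r)) as (g & Hg & Hge).
  { intros p Hin.
    set (D := dist2 O p). set (s := d1 * (fst p - fst O) + d2 * (snd p - snd O)).
    destruct (Hp p Hin) as [A|A]; fold D s in A.
    - exists (Rmin 1 ((r * r - D) / (2 * Rabs s + nd + 1))). split.
      { apply Rmin_pos; [lra|]. apply Rdiv_lt_0_compat; [lra|]. pose proof (Rabs_pos s). lra. }
      intros e He. cbv beta. rewrite dist2_shift. fold nd D s. pose proof (Rmin_l 1 ((r * r - D) / (2 * Rabs s + nd + 1))).
      pose proof (Rmin_r 1 ((r * r - D) / (2 * Rabs s + nd + 1))).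
      assert (Hden : 0 < 2 * Rabs s + nd + 1) by (pose proof (Rabs_pos s); lra).
      assert (e * (2 * Rabs s + nd + 1) <= r * r - D).
      { assert (e <= (r * r - D) / (2 * Rabs s + nd + 1)) by lra.
        apply (Rmult_le_compat_r (2 * Rabs s + nd + 1)) in H1; [|lra].
        unfold Rdiv in H1. rewrite Rmult_assoc, Rinv_l in H1 by lra. lra. }
      assert (- s <= Rabs s) by (rewrite <- Rabs_Ropp; apply RRle_abs).
      assert (e * e * nd <= e * nd) by (assert (e*e <= e) by nra; nra).
      assert (- 2 * e * s <= 2 * e * Rabs s) by nra.
      nra.
    - exists (s / (nd + 1)). split. { apply Rdiv_lt_0_compat; lra. }
      intros e He. cbv beta. rewrite dist2_shift. fold nd D s. assert (e * (nd + 1) <= s).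
      { destruct He as [_ He]. apply (Rmult_le_compat_r (nd + 1)) in He; [|lra].
        unfold Rdiv in He. rewrite Rmult_assoc, Rinv_l in He by lra. lra. }
      pose proof (Hcov p Hin). fold D in H0. nra. }
  destruct (fin_max Sl (fun p => dist2 (fst O + g * d1, snd O + g * d2) p) (r * r)) as (M & HM & HMp).
  { intros p Hin. apply Hge; auto. lra. }
  destruct Sl as [|p0 Sl']; [congruence|].
  assert (HM0 : 0 <= M) by (eapply Rle_trans; [apply dist2_nonneg| apply (HMp p0); left; auto]).
  assert (Hs : r <= sqrt M).
  { apply (Hmin (fst O + g * d1, snd O + g * d2)). apply sqrt_pos.
    intros p Hin. rewrite sqrt_sqrt by auto. apply HMp; auto. }
  assert (sqrt M < r).
  { rewrite <- (sqrt_square r) by auto. apply sqrt_lt_1; nra. }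
  lra.
Qed.

Lemma cos3 x : cos (3 * x) = 4 * cos x ^ 3 - 3 * cos x.
Proof.
  replace (3 * x) with (2 * x + x) by ring. rewrite cos_plus, cos_2a, sin_2a.
  pose proof (sin2_cos2 x). unfold Rsqr in H.
  replace ((cos x * cos x - sin x * sin x) * cos x - 2 * sin x * cos x * sin x) with
    (cos x * (cos x * cos x) - 3 * cos x * (sin x * sin x)) by ring.
  replace (sin x * sin x) with (1 - cos x * cos x) by lra. ring.
Qed.

Lemma cos_PI5 : 0.8 <= cos (PI / 5).
Proof.
  set (c := cos (PI / 5)).
  assert (Hc0 : 0 <= c) by (apply cos_ge_0; pose proof PI_RGT_0; lra).
  assert (E : cos (3 * (PI / 5)) = - cos (2 * (PI / 5))).
  { replace (3 * (PI / 5)) with (PI - 2 * (PI / 5)) by field. apply Rtrigo_facts.cos_pi_minus. }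
  rewrite cos3, cos_2a_cos in E. fold c in E.
  assert (Q : (c + 1) * (4 * c * c - 2 * c - 1) = 0) by nra.
  apply Rmult_integral in Q. destruct Q as [Q|Q]; [lra|].
  nra.
Qed.

Lemma num_key R c s c3 xi ze z r :
  0 < R -> 0.8 <= c -> 0 < s -> s * s + c * c = 1 -> c3 = 4 * c ^ 3 - 3 * c ->
  xi <= R * c3 -> R * R * (c * c) <= xi * xi + ze * ze -> 0 <= r -> z + r <= R * s -> - (R * s) <= z - r ->
  r * r < (R * c - xi) ^ 2 + (z - ze) ^ 2.
Proof.
  intros HR Hc Hs Hsc Hc3 Hxi Hn Hr Hz1 Hz2.
  assert (Hc1 : c <= 1) by nra.
  assert (c3 < c) by (subst c3; nra).
  assert (Hrs : r <= R * s) by lra.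
  assert (Hss : s * s <= c * c) by nra.
  destruct (Rlt_dec xi 0) as [Hneg|Hpos].
  - assert (R * c < R * c - xi) by lra.
    assert (0 < R * c) by nra.
    assert (R * c * (R * c) < (R * c - xi) ^ 2) by nra.
    assert (r * r <= R * s * (R * s)) by nra.
    assert (R * s * (R * s) <= R * c * (R * c)) by nra.
    assert (0 <= (z - ze) ^ 2) by apply pow2_ge_0.
    lra.
  - assert (0 <= c3) by nra.
    assert (xi * xi <= R * c3 * (R * c3)) by nra.
    assert (Hpoly : c * c - c3 * c3 >= s * s).
    { subst c3. assert (s * s = 1 - c * c) by lra. rewrite H2.
      set (y := c * c).
      assert (0.64 <= y <= 1) by (unfold y; nra).
      replace ((4 * c ^ 3 - 3 * c) * (4 * c ^ 3 - 3 * c)) with (y * (4 * y - 3) * (4 * y - 3)) by (unfold y; ring).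
      assert (A : -16 * y * y + 8 * y + 1 <= 0) by nra.
      assert (B : 0 <= (1 - y) * (- (-16 * y * y + 8 * y + 1))) by (apply Rmult_le_pos; lra).
      apply Rle_ge. replace (c * c) with y by reflexivity. nra. }
    assert (Hze : R * s * (R * s) <= ze * ze) by nra.
    assert (0 < (R * c - xi) ^ 2) by (assert (0 < R * c - xi) by nra; nra).
    assert (r * r <= (z - ze) ^ 2).
    { destruct (Rle_dec 0 ze).
      - assert (R * s <= ze) by nra. assert (r <= ze - z) by lra. nra.
      - assert (ze <= - (R * s)) by nra. assert (r <= z - ze) by lra. nra. }
    lra.
Qed.

Definition cross (u v : point) : R := fst u * snd v - snd u * fst v.
Definition crossX (X p q : point) : R :=
  (fst p - fst X) * (snd q - snd X) - (snd p - snd X) * (fst q - fst X).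
Definition G (X a b c : point) : Prop :=
  (crossX X a b > 0 /\ crossX X b c > 0) \/
  (crossX X b c > 0 /\ crossX X c a > 0) \/
  (crossX X c a > 0 /\ crossX X a b > 0).

Lemma polar (x y : R) : (x <> 0 \/ y <> 0) ->
  exists r t, 0 < r /\ x = r * cos t /\ y = r * sin t /\ - PI <= t <= PI.
Proof.
  intros H.
  assert (Hp : 0 < x*x + y*y).
  { destruct H; [assert (0 < x*x) by (apply Rsqr_pos_lt; auto) | assert (0 < y*y) by (apply Rsqr_pos_lt; auto)]; nra. }
  set (r := sqrt (x*x+y*y)).
  assert (Hr : 0 < r) by (apply sqrt_lt_R0; auto).
  assert (Hrr : r * r = x*x+y*y) by (apply sqrt_sqrt; lra).
  assert (Hc : -1 <= x / r <= 1).
  { split.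
    - apply (Rmult_le_reg_r r); auto. unfold Rdiv; rewrite Rmult_assoc, Rinv_l by lra. nra.
    - apply (Rmult_le_reg_r r); auto. unfold Rdiv; rewrite Rmult_assoc, Rinv_l by lra. nra. }
  assert (Hs : sqrt (1 - (x/r)²) = Rabs y / r).
  { replace (1 - (x/r)²) with (Rsqr (y / r)).
    - rewrite sqrt_Rsqr_abs. unfold Rdiv. rewrite Rabs_mult. rewrite (Rabs_pos_eq (/r)); auto.
      left; apply Rinv_0_lt_compat; auto.
    - unfold Rsqr. assert (r <> 0) by lra. field_simplify_eq; auto. lra. }
  pose proof (acos_bound (x/r)) as Hb.
  destruct (Rle_dec 0 y) as [Hy|Hy].
  - exists r, (acos (x/r)). rewrite cos_acos by auto. rewrite sin_acos by auto.
    rewrite Hs, Rabs_pos_eq by auto. repeat split; try field; try lra.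
  - exists r, (- acos (x/r)). rewrite <- cos_sym. rewrite sin_antisym.
    rewrite cos_acos by auto. rewrite sin_acos by auto.
    rewrite Hs, Rabs_left by lra. repeat split; try field; try lra.
Qed.

Lemma cross_polar (X : point) ra ta rb tb :
  crossX X (fst X + ra * cos ta, snd X + ra * sin ta) (fst X + rb * cos tb, snd X + rb * sin tb)
  = ra * rb * sin (tb - ta).
Proof. unfold crossX; simpl. rewrite sin_minus. ring. Qed.

Lemma sin3_pos x y z : 0 < x -> 0 < y -> 0 < z -> x + y + z = 2 * PI ->
  (sin x > 0 /\ sin y > 0) \/ (sin y > 0 /\ sin z > 0) \/ (sin z > 0 /\ sin x > 0).
Proof.
  intros. pose proof PI_RGT_0.
  destruct (Rlt_dec x PI); destruct (Rlt_dec y PI).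
  - left; split; apply sin_gt_0; lra.
  - right; right; split; apply sin_gt_0; lra.
  - right; left; split; apply sin_gt_0; lra.
  - lra.
Qed.

Lemma sin3_nonneg x y z : 0 <= x -> 0 <= y -> 0 <= z -> x + y + z = 2 * PI ->
  (sin x >= 0 /\ sin y >= 0) \/ (sin y >= 0 /\ sin z >= 0) \/ (sin z >= 0 /\ sin x >= 0).
Proof.
  intros. pose proof PI_RGT_0.
  destruct (Rle_dec x PI); destruct (Rle_dec y PI).
  - left; split; apply Rle_ge, sin_ge_0; lra.
  - right; right; split; apply Rle_ge, sin_ge_0; lra.
  - right; left; split; apply Rle_ge, sin_ge_0; lra.
  - lra.
Qed.

Lemma sin_shift2PI t : sin (t + 2 * PI) = sin t.
Proof. rewrite sin_plus, sin_2PI, cos_2PI. ring. Qed.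
Lemma cos_shift2PI t : cos (t + 2 * PI) = cos t.
Proof. rewrite cos_plus, sin_2PI, cos_2PI. ring. Qed.

Lemma pos_mul3 r1 r2 s : 0 < r1 -> 0 < r2 -> (r1 * r2 * s > 0 <-> s > 0).
Proof. intros. split; intros. - destruct (Rle_dec s 0); [|lra]. assert (0 < r1*r2) by nra. nra. - assert (0 < r1*r2) by nra. nra. Qed.

Lemma ccw_G X a b c : ccw_between X a b c <-> G X a b c.
Proof.
  split.
  - intros (ta & tb & tc & ra & rb & rc & Ha & Hb & Hc & -> & -> & -> & H1 & H2 & H3).
    unfold G. rewrite !cross_polar.
    rewrite !pos_mul3 by auto.
    replace (ta - tc) with ((ta + 2*PI - tc) - 2*PI) by ring.
    assert (E : forall t, sin (t - 2*PI) = sin t).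
    { intro t. rewrite <- (sin_shift2PI (t - 2*PI)). f_equal; ring. }
    rewrite E.
    apply sin3_pos; lra.
  - intros HG.
    assert (Hne : forall p q r, G X p q r -> (fst p - fst X <> 0 \/ snd p - snd X <> 0)).
    { intros p q r Hg. destruct (Req_dec (fst p - fst X) 0); destruct (Req_dec (snd p - snd X) 0); auto.
      exfalso. unfold G, crossX in Hg. rewrite H, H0 in Hg. lra. }
    assert (HGb : G X b c a) by (unfold G in *; tauto).
    assert (HGc : G X c a b) by (unfold G in *; tauto).
    destruct (polar _ _ (Hne _ _ _ HG)) as (ra & ta & Hra & Hxa & Hya & Hta).
    destruct (polar _ _ (Hne _ _ _ HGb)) as (rb & tb0 & Hrb & Hxb & Hyb & Htb).
    destruct (polar _ _ (Hne _ _ _ HGc)) as (rc & tc0 & Hrc & Hxc & Hyc & Htc).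
    assert (Ea : a = (fst X + ra * cos ta, snd X + ra * sin ta)).
    { destruct a; simpl in *; f_equal; lra. }
    assert (Shift : forall t0, -PI <= t0 <= PI -> exists t, ta < t <= ta + 2*PI /\ cos t = cos t0 /\ sin t = sin t0).
    { intros t0 Ht0. pose proof PI_RGT_0. destruct (Rlt_dec ta t0).
      - exists t0. split; [lra | split; reflexivity].
      - destruct (Rlt_dec ta (t0 + 2*PI)).
        + exists (t0 + 2*PI). rewrite sin_shift2PI, cos_shift2PI. split; [lra | split; reflexivity].
        + exists (t0 + 2*PI + 2*PI). rewrite !sin_shift2PI, !cos_shift2PI. split; [lra | split; reflexivity]. }
    destruct (Shift tb0 Htb) as (tb & Htb' & Ecb & Esb).
    destruct (Shift tc0 Htc) as (tc & Htc' & Ecc & Esc).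
    assert (Eb : b = (fst X + rb * cos tb, snd X + rb * sin tb)).
    { destruct b; simpl in *; rewrite Ecb, Esb; f_equal; lra. }
    assert (Ec : c = (fst X + rc * cos tc, snd X + rc * sin tc)).
    { destruct c; simpl in *; rewrite Ecc, Esc; f_equal; lra. }
    clear Hxa Hya Hxb Hyb Hxc Hyc Ecb Esb Ecc Esc HGb HGc Hne.
    rewrite Ea, Eb, Ec in HG. unfold G in HG. rewrite !cross_polar in HG.
    rewrite !pos_mul3 in HG by auto.
    exists ta, tb, tc, ra, rb, rc. repeat split; auto.
    + lra.
    + destruct (Rlt_dec tb tc); auto. exfalso.
      destruct (Req_dec tc (ta + 2*PI)) as [E1|E1].
      { rewrite E1 in HG. replace (ta - (ta + 2*PI)) with (-(2*PI)) in HG by ring.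
        replace (ta + 2 * PI - tb) with (-(tb - ta - 2*PI)) in HG by ring.
        rewrite sin_antisym in HG. rewrite sin_antisym, sin_2PI in HG.
        assert (sin (tb - ta - 2*PI) = sin (tb - ta)).
        { rewrite <- (sin_shift2PI (tb - ta - 2*PI)). f_equal; ring. }
        rewrite H in HG. lra. }
      pose proof (sin3_nonneg (tc - ta) (tb - tc) (ta + 2*PI - tb)) as Hs.
      assert (E2 : sin (tb - ta) = - sin (ta + 2*PI - tb)).
      { rewrite <- sin_antisym. rewrite <- (sin_shift2PI (-(ta + 2*PI - tb))). f_equal; ring. }
      assert (E3 : sin (tc - tb) = - sin (tb - tc)).
      { rewrite <- sin_antisym. f_equal; ring. }
      assert (E4 : sin (ta - tc) = - sin (tc - ta)).
      { rewrite <- sin_antisym. f_equal; ring. }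
      rewrite E2, E3, E4 in HG.
      destruct Hs as [[? ?]|[[? ?]|[? ?]]]; try lra.
    + destruct (Req_dec tc (ta + 2*PI)) as [E1|E1]; [|lra]. exfalso.
      rewrite E1 in HG. replace (ta - (ta + 2*PI)) with (-(2*PI)) in HG by ring.
      rewrite sin_antisym, sin_2PI in HG.
      assert (sin (ta + 2 * PI - tb) = - sin (tb - ta)).
      { rewrite <- sin_antisym. rewrite <- (sin_shift2PI (-(tb - ta))). f_equal; ring. }
      rewrite H in HG. lra.
Qed.

Definition affine (f : point -> R) := exists w1 w2 c0, forall Z, f Z = w1 * fst Z + w2 * snd Z + c0.

Lemma bary f X a b c : affine f ->
  crossX a b c * f X = crossX X b c * f a + crossX X c a * f b + crossX X a b * f c.
Proof. intros (w1 & w2 & c0 & Hf). rewrite !Hf. unfold crossX. ring. Qed.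

Lemma sumD X a b c : crossX X a b + crossX X b c + crossX X c a = crossX a b c.
Proof. unfold crossX. ring. Qed.

Lemma pluck f X Y p q : affine f -> f p = 0 -> f q = 0 ->
  crossX X p q * f Y = crossX Y p q * f X.
Proof.
  intros (w1 & w2 & c0 & Hf) Hp Hq. rewrite Hf in Hp, Hq. rewrite !Hf.
  set (d1 := fst p - fst q). set (d2 := snd p - snd q).
  assert (Hw : w1 * d1 + w2 * d2 = 0) by (unfold d1, d2; lra).
  assert (Key : forall Z, (d1*d1 + d2*d2) * (w1 * fst Z + w2 * snd Z + c0) = (d1 * w2 - d2 * w1) * ( - crossX Z p q)).
  { intro Z. assert (c0 = - (w1 * fst p + w2 * snd p)) by lra. subst c0.
    transitivity ((d1 * w2 - d2 * w1) * ( - crossX Z p q) + (w1 * d1 + w2 * d2) * (d1 * (fst Z - fst p) + d2 * (snd Z - snd p))).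
    - unfold crossX, d1, d2. ring.
    - rewrite Hw. ring. }
  destruct (Req_dec (d1*d1+d2*d2) 0) as [Hz|Hz].
  - assert (d1 = 0) by nra. assert (d2 = 0) by nra.
    assert (E : forall Z, crossX Z p q = 0).
    { intro Z. unfold crossX. unfold d1, d2 in *. assert (fst p = fst q) by lra. assert (snd p = snd q) by lra.
      rewrite H1, H2. ring. }
    rewrite !E. ring.
  - apply (Rmult_eq_reg_l (d1*d1+d2*d2)); auto.
    replace ((d1 * d1 + d2 * d2) * (crossX X p q * (w1 * fst Y + w2 * snd Y + c0)))
      with (crossX X p q * ((d1 * d1 + d2 * d2) * (w1 * fst Y + w2 * snd Y + c0))) by ring.
    replace ((d1 * d1 + d2 * d2) * (crossX Y p q * (w1 * fst X + w2 * snd X + c0)))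
      with (crossX Y p q * ((d1 * d1 + d2 * d2) * (w1 * fst X + w2 * snd X + c0))) by ring.
    rewrite !Key. ring.
Qed.

Lemma mul_np x y : x <= 0 -> 0 <= y -> x * y <= 0.
Proof. intros; nra. Qed.

Section Inv.
Variable h : nat -> point -> R.
Hypothesis Haff : forall k, affine (h k).

Definition inK (p : point) := forall k, h k p >= 0.
Definition onB (p : point) := inK p /\ exists k, h k p = 0.
Definition intK (p : point) := forall k, h k p > 0.

Lemma G_pos X a b c : onB a -> onB b -> onB c -> intK X -> crossX a b c > 0 -> G X a b c.
Proof.
  intros [Ka [ka Za]] [Kb [kb Zb]] [Kc [kc Zc]] HX HD.
  pose proof (sumD X a b c) as Hs.
  unfold G.
  destruct (Rlt_dec 0 (crossX X a b)) as [P1|P1];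
  destruct (Rlt_dec 0 (crossX X b c)) as [P2|P2];
  destruct (Rlt_dec 0 (crossX X c a)) as [P3|P3]; try tauto; exfalso.
  - pose proof (bary (h kc) X a b c (Haff kc)) as E. rewrite Zc in E.
    specialize (HX kc). specialize (Ka kc). specialize (Kb kc).
    assert (0 < crossX a b c * h kc X) by (apply Rmult_lt_0_compat; lra).
    assert (crossX X b c * h kc a <= 0) by (apply mul_np; lra).
    assert (crossX X c a * h kc b <= 0) by (apply mul_np; lra). lra.
  - pose proof (bary (h ka) X a b c (Haff ka)) as E. rewrite Za in E.
    specialize (HX ka). specialize (Kc ka). specialize (Kb ka).
    assert (0 < crossX a b c * h ka X) by (apply Rmult_lt_0_compat; lra).
    assert (crossX X a b * h ka c <= 0) by (apply mul_np; lra).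
    assert (crossX X c a * h ka b <= 0) by (apply mul_np; lra). lra.
  - pose proof (bary (h kb) X a b c (Haff kb)) as E. rewrite Zb in E.
    specialize (HX kb). specialize (Ka kb). specialize (Kc kb).
    assert (0 < crossX a b c * h kb X) by (apply Rmult_lt_0_compat; lra).
    assert (crossX X a b * h kb c <= 0) by (apply mul_np; lra).
    assert (crossX X b c * h kb a <= 0) by (apply mul_np; lra). lra.
  - lra.
Qed.

Lemma G_neg X a b c : onB a -> onB b -> onB c -> intK X -> crossX a b c < 0 -> ~ G X a b c.
Proof.
  intros [Ka [ka Za]] [Kb [kb Zb]] [Kc [kc Zc]] HX HD HG.
  unfold G in HG.
  destruct HG as [[P1 P2]|[[P1 P2]|[P1 P2]]].
  - pose proof (bary (h kb) X a b c (Haff kb)) as E. rewrite Zb in E.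
    specialize (HX kb). specialize (Ka kb). specialize (Kc kb).
    assert (crossX a b c * h kb X < 0) by (apply Rmult_neg_pos; lra).
    assert (0 <= crossX X a b * h kb c) by (apply Rmult_le_pos; lra).
    assert (0 <= crossX X b c * h kb a) by (apply Rmult_le_pos; lra). lra.
  - pose proof (bary (h kc) X a b c (Haff kc)) as E. rewrite Zc in E.
    specialize (HX kc). specialize (Ka kc). specialize (Kb kc).
    assert (crossX a b c * h kc X < 0) by (apply Rmult_neg_pos; lra).
    assert (0 <= crossX X b c * h kc a) by (apply Rmult_le_pos; lra).
    assert (0 <= crossX X c a * h kc b) by (apply Rmult_le_pos; lra). lra.
  - pose proof (bary (h ka) X a b c (Haff ka)) as E. rewrite Za in E.
    specialize (HX ka). specialize (Kc ka). specialize (Kb ka).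
    assert (crossX a b c * h ka X < 0) by (apply Rmult_neg_pos; lra).
    assert (0 <= crossX X a b * h ka c) by (apply Rmult_le_pos; lra).
    assert (0 <= crossX X c a * h ka b) by (apply Rmult_le_pos; lra). lra.
Qed.

Lemma G_degen X a b c : (a = b \/ b = c \/ c = a) -> ~ G X a b c.
Proof.
  intros H HG; unfold G, crossX in HG.
  destruct H as [<-|[<-|<-]]; lra.
Qed.

Lemma affine_line f a b c mu : affine f ->
  fst c - fst a = mu * (fst b - fst a) -> snd c - snd a = mu * (snd b - snd a) ->
  f c = f a + mu * (f b - f a).
Proof. intros (w1 & w2 & c0 & Hf) H1 H2. rewrite !Hf. nra. Qed.

Lemma collinear_common a b c : onB a -> onB b -> onB c -> crossX a b c = 0 ->
  a <> b -> b <> c -> c <> a -> exists k, h k a = 0 /\ h k b = 0 /\ h k c = 0.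
Proof.
  intros [Ka [ka Za]] [Kb [kb Zb]] [Kc [kc Zc]] HD Hab Hbc Hca.
  set (u1 := fst b - fst a). set (u2 := snd b - snd a).
  set (v1 := fst c - fst a). set (v2 := snd c - snd a).
  assert (Hu : u1*u1 + u2*u2 > 0).
  { destruct (Req_dec u1 0); destruct (Req_dec u2 0).
    - exfalso. apply Hab. destruct a, b; unfold u1, u2 in *; simpl in *. f_equal; lra.
    - assert (0 < u2*u2) by (apply Rsqr_pos_lt; auto). nra.
    - assert (0 < u1*u1) by (apply Rsqr_pos_lt; auto). nra.
    - assert (0 < u2*u2) by (apply Rsqr_pos_lt; auto). nra. }
  set (mu := (v1*u1 + v2*u2) / (u1*u1+u2*u2)).
  assert (HD' : u1 * v2 - u2 * v1 = 0) by (unfold crossX in HD; unfold u1,u2,v1,v2; lra).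
  assert (E1 : v1 = mu * u1).
  { unfold mu. field_simplify_eq; [|lra]. clear -HD'. clearbody u1 u2 v1 v2.
    assert (u2*(u1*v2 - u2*v1) = 0) by (rewrite HD'; ring). lra. }
  assert (E2 : v2 = mu * u2).
  { unfold mu. field_simplify_eq; [|lra]. clear -HD'. clearbody u1 u2 v1 v2.
    assert (u1*(u1*v2 - u2*v1) = 0) by (rewrite HD'; ring). lra. }
  assert (Hf : forall k, h k c = h k a + mu * (h k b - h k a)).
  { intro k. apply affine_line; auto. }
  assert (Hmu0 : mu <> 0).
  { intro. apply Hca. destruct a, c; unfold v1, v2 in *; simpl in *. rewrite H in E1, E2. f_equal; lra. }
  assert (Hmu1 : mu <> 1).
  { intro. apply Hbc. destruct b, c; unfold u1,u2,v1, v2 in *; simpl in *. rewrite H in E1, E2. f_equal; lra. }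
  destruct (Rlt_dec mu 0).
  - exists ka. pose proof (Hf ka). specialize (Kb ka). specialize (Kc ka).
    rewrite Za in H. assert (h ka c = 0) by nra. assert (h ka b = 0) by nra. auto.
  - destruct (Rlt_dec mu 1).
    + exists kc. pose proof (Hf kc). specialize (Kb kc). specialize (Ka kc).
      rewrite Zc in H. assert (h kc a = 0) by nra. assert (h kc b = 0) by nra. auto.
    + exists kb. pose proof (Hf kb). specialize (Ka kb). specialize (Kc kb).
      rewrite Zb in H. assert (h kb c = 0) by nra. assert (h kb a = 0) by nra. auto.
Qed.

Lemma sign_same f X Y p q : affine f -> f p = 0 -> f q = 0 -> f X > 0 -> f Y > 0 ->
  (crossX X p q > 0 <-> crossX Y p q > 0).
Proof.
  intros Ha Hp Hq HX HY. pose proof (pluck f X Y p q Ha Hp Hq) as E.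
  split; intro H.
  - destruct (Rlt_dec 0 (crossX Y p q)); auto. exfalso.
    assert (0 < crossX X p q * f Y) by (apply Rmult_lt_0_compat; lra).
    assert (crossX Y p q * f X <= 0) by (apply mul_np; lra). lra.
  - destruct (Rlt_dec 0 (crossX X p q)); auto. exfalso.
    assert (0 < crossX Y p q * f X) by (apply Rmult_lt_0_compat; lra).
    assert (crossX X p q * f Y <= 0) by (apply mul_np; lra). lra.
Qed.

Lemma G_invariant X Y a b c : onB a -> onB b -> onB c -> intK X -> intK Y ->
  (G X a b c <-> G Y a b c).
Proof.
  intros Ha Hb Hc HX HY.
  destruct (Rtotal_order (crossX a b c) 0) as [Hn|[Hz|Hp]].
  - pose proof (G_neg X a b c Ha Hb Hc HX Hn). pose proof (G_neg Y a b c Ha Hb Hc HY Hn). tauto.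
  - destruct (classic (a = b \/ b = c \/ c = a)) as [Hd|Hd].
    + pose proof (G_degen X a b c Hd). pose proof (G_degen Y a b c Hd). tauto.
    + destruct (collinear_common a b c Ha Hb Hc Hz) as (k & Za & Zb & Zc); try tauto.
      specialize (HX k). specialize (HY k).
      pose proof (sign_same (h k) X Y a b (Haff k) Za Zb HX HY).
      pose proof (sign_same (h k) X Y b c (Haff k) Zb Zc HX HY).
      pose proof (sign_same (h k) X Y c a (Haff k) Zc Za HX HY).
      unfold G. tauto.
  - pose proof (G_pos X a b c Ha Hb Hc HX Hp). pose proof (G_pos Y a b c Ha Hb Hc HY Hp). tauto.
Qed.
End Inv.


Lemma cosZ_dummy : True. Proof. exact I. Qed.
Lemma cosZ x (t : Z) : cos (x + 2 * PI * IZR t) = cos x.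
Proof.
  destruct (Z_le_gt_dec 0 t) as [H|H].
  - replace (IZR t) with (INR (Z.to_nat t)).
    + replace (x + 2 * PI * INR (Z.to_nat t)) with (x + 2 * INR (Z.to_nat t) * PI) by ring.
      apply cos_period.
    + rewrite INR_IZR_INZ. f_equal. apply Z2Nat.id. auto.
  - set (t' := (- t)%Z).
    replace (IZR t) with (- INR (Z.to_nat t')).
    + rewrite <- (cos_period (x + 2 * PI * - INR (Z.to_nat t')) (Z.to_nat t')). f_equal. ring.
    + rewrite INR_IZR_INZ. rewrite Z2Nat.id by (unfold t'; lia). unfold t'. rewrite opp_IZR. ring.
Qed.

Section Poly.
Variable n : nat.
Hypothesis Hn : (4 < n)%nat.

Definition th := PI / INR n.

Lemma INRn_pos : 0 < INR n.
Proof. apply lt_0_INR. lia. Qed.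
Lemma INRn_ge5 : 5 <= INR n.
Proof. replace 5 with (INR 5) by (simpl; ring). apply le_INR. lia. Qed.

Lemma th_pos : 0 < th.
Proof. unfold th. apply Rdiv_lt_0_compat; [apply PI_RGT_0 | apply INRn_pos]. Qed.
Lemma th_n : th * INR n = PI.
Proof. unfold th. field. pose proof INRn_pos. lra. Qed.
Lemma th_le : th <= PI / 5.
Proof. unfold th. pose proof INRn_ge5. pose proof PI_RGT_0. apply Rmult_le_compat_l; [lra|].
  apply Rinv_le_contravar; lra. Qed.

Lemma cos_dec_le x y : 0 <= x -> x <= y -> y <= PI -> cos y <= cos x.
Proof. intros. destruct (Req_dec x y). subst; lra. left. apply cos_decreasing_1; lra. Qed.

Lemma VL3 (m : Z) : (forall t : Z, m <> (Z.of_nat n * t)%Z /\ m <> (Z.of_nat n * t + 1)%Z) ->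
  cos ((2 * IZR m - 1) * th) <= cos (3 * th).
Proof.
  intros Hm.
  pose proof th_pos as Ht. pose proof th_n as Htn. pose proof PI_RGT_0.
  set (N := Z.of_nat n).
  assert (HN : (0 < N)%Z) by (unfold N; lia).
  set (t := (m / N)%Z). set (r := (m mod N)%Z).
  assert (Hm' : m = (N * t + r)%Z) by (apply Z.div_mod; lia).
  assert (Hr : (0 <= r < N)%Z) by (apply Z.mod_pos_bound; lia).
  assert (Hr2 : (2 <= r)%Z).
  { destruct (Hm t) as [H1 H2]. fold N in H1, H2. lia. }
  assert (E : (2 * IZR m - 1) * th = (2 * IZR r - 1) * th + 2 * PI * IZR t).
  { rewrite Hm', plus_IZR, mult_IZR. unfold N. rewrite <- INR_IZR_INZ. rewrite <- Htn. ring. }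
  rewrite E, cosZ.
  assert (HrR : 2 <= IZR r) by (apply IZR_le; lia).
  assert (HrN : IZR r + 1 <= INR n) by (rewrite INR_IZR_INZ; fold N; rewrite <- plus_IZR; apply IZR_le; lia).
  assert (Hn5 := INRn_ge5).
  destruct (Rle_dec ((2 * IZR r - 1)) (INR n)) as [Hle|Hgt].
  - apply cos_dec_le; try nra.
  - rewrite (cos_sym ((2 * IZR r - 1) * th)), <- (cos_shift2PI (- ((2 * IZR r - 1) * th))).
    replace (- ((2 * IZR r - 1) * th) + 2 * PI) with ((2 * INR n - 2 * IZR r + 1) * th) by (rewrite <- Htn; ring).
    apply cos_dec_le; nra.
Qed.

Lemma cos3_lt : cos (3 * th) < cos th.
Proof.
  pose proof th_pos. pose proof th_le. pose proof PI_RGT_0.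
  apply cos_decreasing_1; lra.
Qed.

Lemma VL1 (m : Z) : cos ((2 * IZR m - 1) * th) <= cos th.
Proof.
  pose proof th_pos as Ht. pose proof th_n as Htn. pose proof PI_RGT_0.
  set (N := Z.of_nat n).
  assert (HN : (0 < N)%Z) by (unfold N; lia).
  set (t := (m / N)%Z). set (r := (m mod N)%Z).
  assert (Hm' : m = (N * t + r)%Z) by (apply Z.div_mod; lia).
  assert (Hr : (0 <= r < N)%Z) by (apply Z.mod_pos_bound; lia).
  destruct (Z.eq_dec r 0) as [H0|H0].
  - assert (E : (2 * IZR m - 1) * th = - th + 2 * PI * IZR t).
    { rewrite Hm', plus_IZR, mult_IZR, H0. unfold N. rewrite <- INR_IZR_INZ. rewrite <- Htn. simpl. ring. }
    rewrite E, cosZ, <- cos_sym. lra.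
  - destruct (Z.eq_dec r 1) as [H1|H1].
    + assert (E : (2 * IZR m - 1) * th = th + 2 * PI * IZR t).
      { rewrite Hm', plus_IZR, mult_IZR, H1. unfold N. rewrite <- INR_IZR_INZ. rewrite <- Htn. simpl. ring. }
      rewrite E, cosZ. lra.
    + pose proof cos3_lt.
      assert (cos ((2 * IZR m - 1) * th) <= cos (3 * th)); [|lra].
      apply VL3. intro t0. split; intro Hc.
      * apply H0. unfold r. rewrite Hc. fold N. rewrite Z.mul_comm, Z_mod_mult. auto.
      * apply H1. unfold r. rewrite Hc. fold N. rewrite Z.mul_comm. rewrite Z.add_comm, Z_mod_plus_full. apply Z.mod_small. lia.
Qed.


Variable C : point.
Variables Rad phi : R.
Hypothesis HR : 0 < Rad.

Definition alpha (i : nat) := phi + 2 * PI * INR i / INR n.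
Definition beta (k : nat) := alpha k + th.
Definition Hf (k : nat) (X : point) : R :=
  Rad * cos th - ((fst X - fst C) * cos (beta k) + (snd X - snd C) * sin (beta k)).
Definition V (i : nat) := vtx C Rad phi n i.

Lemma Hf_affine k : affine (Hf k).
Proof. exists (- cos (beta k)), (- sin (beta k)), (Rad * cos th + fst C * cos (beta k) + snd C * sin (beta k)).
  intro Z. unfold Hf. ring. Qed.

Lemma Hf_vtx i k : Hf k (V i) = Rad * (cos th - cos ((2 * IZR (Z.of_nat i - Z.of_nat k) - 1) * th)).
Proof.
  unfold Hf, V, vtx. simpl. rewrite minus_IZR, <- !INR_IZR_INZ.
  replace ((2 * (INR i - INR k) - 1) * th) with (alpha i - beta k).
  - rewrite cos_minus. unfold alpha. ring.
  - unfold beta, alpha, th. field. pose proof INRn_pos. lra.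
Qed.

Lemma Hf_vtx_ge i k : Hf k (V i) >= 0.
Proof. rewrite Hf_vtx. pose proof (VL1 (Z.of_nat i - Z.of_nat k)). apply Rle_ge. apply Rmult_le_pos; lra. Qed.

Lemma Hf_vtx_zero i k : Hf k (V i) = 0 ->
  exists t : Z, (Z.of_nat i - Z.of_nat k = Z.of_nat n * t)%Z \/ (Z.of_nat i - Z.of_nat k = Z.of_nat n * t + 1)%Z.
Proof.
  intros H. apply NNPP. intro Hne.
  assert (Hall : forall t : Z, (Z.of_nat i - Z.of_nat k <> Z.of_nat n * t)%Z /\ (Z.of_nat i - Z.of_nat k <> Z.of_nat n * t + 1)%Z).
  { intro t. split; intro E; apply Hne; exists t; auto. }
  pose proof (VL3 _ Hall). pose proof cos3_lt. rewrite Hf_vtx in H.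
  assert (0 < Rad * (cos th - cos ((2 * IZR (Z.of_nat i - Z.of_nat k) - 1) * th))) by (apply Rmult_lt_0_compat; lra).
  lra.
Qed.

Lemma Hf_V0 j : Hf j (V j) = 0.
Proof. rewrite Hf_vtx. replace (Z.of_nat j - Z.of_nat j)%Z with 0%Z by lia.
  replace ((2 * IZR 0 - 1) * th) with (- th) by (simpl; ring). rewrite <- cos_sym. ring. Qed.

Lemma Hf_V1 j : Hf j (V (S j)) = 0.
Proof. rewrite Hf_vtx. replace (Z.of_nat (S j) - Z.of_nat j)%Z with 1%Z by lia.
  replace ((2 * IZR 1 - 1) * th) with th by (simpl; ring). ring. Qed.

Lemma seg_aff u v x : on_segment u v x -> exists t, (0 <= t <= 1) /\ forall f, affine f -> f x = (1 - t) * f u + t * f v.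
Proof.
  intros (t & Ht & ->). exists t. split; auto. intros f (w1 & w2 & c0 & Hf').
  rewrite !Hf'. simpl. ring.
Qed.

Definition onE (j : nat) (x : point) := on_segment (V j) (V (S j)) x.

Lemma onE_K j x : onE j x -> (forall k, Hf k x >= 0) /\ Hf j x = 0.
Proof.
  intros H. destruct (seg_aff _ _ _ H) as (t & Ht & Hx). split.
  - intro k. rewrite (Hx _ (Hf_affine k)). pose proof (Hf_vtx_ge j k). pose proof (Hf_vtx_ge (S j) k).
    apply Rle_ge. apply Rplus_le_le_0_compat; apply Rmult_le_pos; lra.
  - rewrite (Hx _ (Hf_affine j)). rewrite Hf_V0, Hf_V1. ring.
Qed.

Lemma V_per i : V (i + n) = V i.
Proof.
  unfold V, vtx.
  replace (phi + 2 * PI * INR (i + n) / INR n) with ((phi + 2 * PI * INR i / INR n) + 2 * PI).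
  - rewrite cos_shift2PI, sin_shift2PI. auto.
  - rewrite plus_INR. field. pose proof INRn_pos. lra.
Qed.



Lemma zarith_adj (j1 j2 : nat) t t' : (j1 < n)%nat -> (j2 < n)%nat ->
  ((Z.of_nat j1 - Z.of_nat j2 = Z.of_nat n * t)%Z \/ (Z.of_nat j1 - Z.of_nat j2 = Z.of_nat n * t + 1)%Z) ->
  ((Z.of_nat j2 - Z.of_nat j1 = Z.of_nat n * t')%Z \/ (Z.of_nat j2 - Z.of_nat j1 = Z.of_nat n * t' + 1)%Z) ->
  j1 = j2.
Proof.
  intros H1 H2 A B.
  destruct (Z_lt_le_dec t 0); [|destruct (Z_lt_le_dec 0 t)];
  (destruct (Z_lt_le_dec t' 0); [|destruct (Z_lt_le_dec 0 t')]); nia.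
Qed.

Definition hedge (j : nat) (x : point) := onE j x /\ x <> V (S j).

Lemma hedge_aff j x : hedge j x -> exists t, (0 <= t < 1) /\
  forall f, affine f -> f x = (1 - t) * f (V j) + t * f (V (S j)).
Proof.
  intros [H Hne]. destruct H as (t & Ht & Hx). exists t. split.
  - destruct (Req_dec t 1) as [E|E]; [|lra]. exfalso. apply Hne. rewrite Hx, E. destruct (V j), (V (S j)). simpl. f_equal; ring.
  - intros f (w1 & w2 & c0 & Hf'). rewrite Hx, !Hf'. simpl. ring.
Qed.

Lemma hedge_half j1 j2 x : hedge j1 x -> onE j2 x -> Hf j2 (V j1) = 0.
Proof.
  intros H1 H2. destruct (hedge_aff _ _ H1) as (t & Ht & Hx).
  destruct (onE_K _ _ H2) as [_ Z2]. rewrite (Hx _ (Hf_affine j2)) in Z2.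
  pose proof (Hf_vtx_ge j1 j2). pose proof (Hf_vtx_ge (S j1) j2).
  assert (0 <= t * Hf j2 (V (S j1))) by (apply Rmult_le_pos; lra).
  assert (0 <= (1 - t) * Hf j2 (V j1)) by (apply Rmult_le_pos; lra).
  assert ((1 - t) * Hf j2 (V j1) = 0) by lra.
  apply Rmult_integral in H5. destruct H5; lra.
Qed.

Lemma hedge_disj j1 j2 x : (j1 < n)%nat -> (j2 < n)%nat -> hedge j1 x -> hedge j2 x -> j1 = j2.
Proof.
  intros L1 L2 H1 H2.
  destruct (Hf_vtx_zero _ _ (hedge_half j1 j2 x H1 (proj1 H2))) as [t A].
  destruct (Hf_vtx_zero _ _ (hedge_half j2 j1 x H2 (proj1 H1))) as [t' B].
  eapply zarith_adj; eauto.
Qed.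

Lemma V_neq j : V j <> V (S j).
Proof.
  intro E. pose proof (Hf_V0 (S j)). rewrite <- E in H.
  destruct (Hf_vtx_zero _ _ H) as [t A]. destruct (Z_lt_le_dec t 0); [|destruct (Z_lt_le_dec 0 t)]; nia.
Qed.

Lemma onE_V0 j : onE j (V j).
Proof. exists 0. split; [lra|]. destruct (V j), (V (S j)); simpl; f_equal; ring. Qed.

Lemma hedge_per x : hedge n x <-> hedge 0 x.
Proof.
  unfold hedge, onE. replace (V n) with (V 0) by (rewrite <- (V_per 0); auto).
  replace (V (S n)) with (V 1) by (rewrite <- (V_per 1); f_equal; lia). tauto.
Qed.

Section Count.
Variable Sl : list point.
Hypothesis Hlen : length Sl = n.
Definition Fe (j : nat) := edge_has_exactly_two Sl C Rad phi n j.
Hypothesis Hsup : forall k, (k < n)%nat -> Fe k \/ Fe (S k).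

Definition bh (j : nat) (x : point) : bool :=
  if ClassicalEpsilon.excluded_middle_informative (hedge j x) then true else false.

Lemma bh_true j x : bh j x = true <-> hedge j x.
Proof. unfold bh. destruct (ClassicalEpsilon.excluded_middle_informative (hedge j x)); split; auto; discriminate. Qed.

Definition cnt j := count (bh j) Sl.

Lemma cnt_ge1 j : Fe j -> (1 <= cnt j)%nat.
Proof.
  intros (p & q & Hp & Hq & Hpq & Sp & Sq & _).
  destruct (classic (p = V (S j))) as [E|E].
  - apply (count_ge1 _ _ q); auto. apply bh_true. split; auto. intro; apply Hpq; congruence.
  - apply (count_ge1 _ _ p); auto. apply bh_true. split; auto.
Qed.

Lemma loc j : (1 <= j <= n)%nat -> (1 <= cnt j)%nat \/ (cnt j = 0%nat /\ (2 <= cnt (j - 1))%nat).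
Proof.
  intros Hj.
  destruct (Hsup (j - 1)%nat ltac:(lia)) as [F|F]; [|left; replace j with (S (j-1)) by lia; apply cnt_ge1; auto].
  destruct (le_lt_dec 1 (cnt j)) as [A|A]; [left; auto|right; split; [lia|]].
  destruct F as (p & q & Hp & Hq & Hpq & Sp & Sq & _).
  assert (NV : ~ In (V j) Sl).
  { intro HV. assert (1 <= cnt j)%nat; [|lia]. apply (count_ge1 _ _ (V j)); auto. apply bh_true.
    split; [apply onE_V0| apply V_neq]. }
  assert (ES : S (j - 1) = j) by lia.
  apply (count_ge2 _ _ p q); auto; apply bh_true; split; auto;
  rewrite ES; intro E; apply NV; rewrite <- E; auto.
Qed.

Lemma all_on_edge x : In x Sl -> exists j, onE j x.
Proof.
  intros Hx. apply NNPP. intro Hno.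
  assert (Hc : (n <= nsum cnt n)%nat).
  { apply cyc_count; [lia| |apply loc].
    unfold cnt, count. f_equal. apply filter_ext. intro y. 
    destruct (bh n y) eqn:E1; destruct (bh 0 y) eqn:E2; auto.
    - apply bh_true in E1. apply hedge_per in E1. apply bh_true in E1. congruence.
    - apply bh_true in E2. apply hedge_per in E2. apply bh_true in E2. congruence. }
  destruct (disj_count bh n Sl) as [_ D].
  { intros y _ j1 j2 L1 L2 B1 B2. apply bh_true in B1, B2. eapply hedge_disj; eauto. }
  assert (nsum (fun j => count (bh j) Sl) n < length Sl)%nat.
  { apply D. exists x. split; auto. intros j _. destruct (bh j x) eqn:E; auto.
    apply bh_true in E. exfalso. apply Hno. exists j. apply E. }
  unfold cnt in Hc. lia.
Qed.

Definition xi k (X : point) := (fst X - fst C) * cos (beta k) + (snd X - snd C) * sin (beta k).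
Definition ze k (X : point) := - (fst X - fst C) * sin (beta k) + (snd X - snd C) * cos (beta k).

Lemma Hf_xi k X : Hf k X = Rad * cos th - xi k X.
Proof. reflexivity. Qed.

Lemma xi_affine k : affine (xi k).
Proof. exists (cos (beta k)), (sin (beta k)), (- fst C * cos (beta k) - snd C * sin (beta k)).
  intro Z; unfold xi; ring. Qed.

Lemma frame_norm k X : xi k X ^ 2 + ze k X ^ 2 = (fst X - fst C) ^ 2 + (snd X - snd C) ^ 2.
Proof. unfold xi, ze. pose proof (sin2_cos2 (beta k)). unfold Rsqr in H.
  replace ((fst X - fst C) ^ 2 + (snd X - snd C) ^ 2) with
    (((fst X - fst C) ^ 2 + (snd X - snd C) ^ 2) * (sin (beta k) * sin (beta k) + cos (beta k) * cos (beta k))) by (rewrite H; ring).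
  ring. Qed.

Lemma dist_frame k X Y : dist2 X Y = (xi k X - xi k Y) ^ 2 + (ze k X - ze k Y) ^ 2.
Proof. unfold dist2, xi, ze. pose proof (sin2_cos2 (beta k)). unfold Rsqr in H.
  transitivity (((fst X - fst Y) ^ 2 + (snd X - snd Y) ^ 2) * (sin (beta k) * sin (beta k) + cos (beta k) * cos (beta k))).
  - rewrite H; ring.
  - ring. Qed.

Lemma frame_eq k p q : xi k p = xi k q -> ze k p = ze k q -> p = q.
Proof.
  intros H1 H2. pose proof (sin2_cos2 (beta k)) as H. unfold Rsqr in H.
  assert (E1 : fst p - fst C = xi k p * cos (beta k) - ze k p * sin (beta k)).
  { unfold xi, ze. replace (fst p - fst C) with ((fst p - fst C) * (sin (beta k) * sin (beta k) + cos (beta k) * cos (beta k))) at 1 by (rewrite H; ring). ring. }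
  assert (E2 : fst q - fst C = xi k q * cos (beta k) - ze k q * sin (beta k)).
  { unfold xi, ze. replace (fst q - fst C) with ((fst q - fst C) * (sin (beta k) * sin (beta k) + cos (beta k) * cos (beta k))) at 1 by (rewrite H; ring). ring. }
  assert (E3 : snd p - snd C = xi k p * sin (beta k) + ze k p * cos (beta k)).
  { unfold xi, ze. replace (snd p - snd C) with ((snd p - snd C) * (sin (beta k) * sin (beta k) + cos (beta k) * cos (beta k))) at 1 by (rewrite H; ring). ring. }
  assert (E4 : snd q - snd C = xi k q * sin (beta k) + ze k q * cos (beta k)).
  { unfold xi, ze. replace (snd q - snd C) with ((snd q - snd C) * (sin (beta k) * sin (beta k) + cos (beta k) * cos (beta k))) at 1 by (rewrite H; ring). ring. }
  destruct p, q; simpl in *. rewrite H1, H2 in E1, E3. f_equal; lra.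
Qed.

Lemma beta_S k : beta (S k) = beta k + 2 * th.
Proof. unfold beta, alpha, th. rewrite S_INR. field. pose proof INRn_pos. lra. Qed.

Lemma beta_prev k : beta (k + n - 1) = beta k - 2 * th + 2 * PI.
Proof. unfold beta, alpha, th. rewrite minus_INR by lia. rewrite plus_INR. simpl. field. pose proof INRn_pos. lra. Qed.

Lemma xi_next k X : xi (S k) X = xi k X * cos (2 * th) + ze k X * sin (2 * th).
Proof. unfold xi, ze. rewrite beta_S, cos_plus, sin_plus. ring. Qed.

Lemma xi_prev k X : xi (k + n - 1) X = xi k X * cos (2 * th) - ze k X * sin (2 * th).
Proof. unfold xi, ze. rewrite beta_prev, cos_shift2PI, sin_shift2PI.
  replace (beta k - 2 * th) with (beta k + - (2 * th)) by ring.
  rewrite cos_plus, sin_plus, <- cos_sym, sin_antisym. ring. Qed.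

Lemma c_ge : 0.8 <= cos th.
Proof. pose proof cos_PI5. pose proof th_le. pose proof th_pos. pose proof PI_RGT_0.
  pose proof (cos_dec_le th (PI / 5)). lra. Qed.

Lemma s_pos : 0 < sin th.
Proof. pose proof th_le. pose proof th_pos. pose proof PI_RGT_0. apply sin_gt_0; lra. Qed.

Lemma ze_bound k p : Hf k p = 0 -> Hf (S k) p >= 0 -> Hf (k + n - 1) p >= 0 ->
  - (Rad * sin th) <= ze k p <= Rad * sin th.
Proof.
  intros H0 H1 H2. rewrite Hf_xi in H0, H1, H2. rewrite xi_next in H1. rewrite xi_prev in H2.
  assert (Hx : xi k p = Rad * cos th) by lra. rewrite Hx in H1, H2.
  rewrite cos_2a_sin, sin_2a in H1, H2.
  pose proof c_ge. pose proof s_pos.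
  assert (0 < 2 * sin th * cos th) by nra.
  split.
  - assert (0 <= 2 * sin th * cos th * (ze k p + Rad * sin th)) by nra. nra.
  - assert (0 <= 2 * sin th * cos th * (Rad * sin th - ze k p)) by nra. nra.
Qed.

Lemma xi_vtx i k : xi k (V i) = Rad * cos ((2 * IZR (Z.of_nat i - Z.of_nat k) - 1) * th).
Proof. pose proof (Hf_vtx i k). rewrite Hf_xi in H. lra. Qed.

Lemma z_small (a N t : Z) : (5 <= N)%Z -> (1 <= a <= 4)%Z -> a <> (N * t)%Z.
Proof. intros. destruct (Z_le_gt_dec t 0); nia. Qed.

Section SED.
Hypothesis Hall : forall x, In x Sl -> exists j, onE j x.
Hypothesis Hsup2 : forall k, (k < n)%nat -> Fe k \/ Fe (S k).

Lemma inK_S p : In p Sl -> forall k, Hf k p >= 0.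
Proof. intros Hp k. destruct (Hall p Hp) as [j Hj]. apply (onE_K j p Hj). Qed.

Lemma far_point k : exists j x, In x Sl /\ onE j x /\
  (forall t : Z, (Z.of_nat j - Z.of_nat k <> Z.of_nat n * t)%Z /\ (Z.of_nat j - Z.of_nat k <> Z.of_nat n * t + 1)%Z) /\
  (forall t : Z, (Z.of_nat (S j) - Z.of_nat k <> Z.of_nat n * t)%Z /\ (Z.of_nat (S j) - Z.of_nat k <> Z.of_nat n * t + 1)%Z).
Proof.
  set (k' := ((k + 2) mod n)%nat).
  assert (Hk' : (k' < n)%nat) by (apply Nat.mod_upper_bound; lia).
  assert (Hq : (k + 2 = n * ((k + 2) / n) + k')%nat) by (apply Nat.div_mod; lia).
  set (q := ((k + 2) / n)%nat) in *.
  assert (Hz : (Z.of_nat k' = Z.of_nat k + 2 - Z.of_nat n * Z.of_nat q)%Z) by lia.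
  assert (HN : (5 <= Z.of_nat n)%Z) by lia.
  destruct (Hsup2 k' Hk') as [F|F]; [exists k'|exists (S k')];
  destruct F as (p & _ & Hp & _ & _ & Sp & _); exists p; (split; [auto|split; [exact Sp|]]);
  split; intro t; split; intro E.
  all: try (apply (z_small 2 (Z.of_nat n) (t + Z.of_nat q)); [lia|lia|]; rewrite Z.mul_add_distr_l; lia).
  all: try (apply (z_small 3 (Z.of_nat n) (t + Z.of_nat q)); [lia|lia|]; rewrite Z.mul_add_distr_l; lia).
  all: try (apply (z_small 4 (Z.of_nat n) (t + Z.of_nat q)); [lia|lia|]; rewrite Z.mul_add_distr_l; lia).
  all: try (apply (z_small 1 (Z.of_nat n) (t + Z.of_nat q)); [lia|lia|]; rewrite Z.mul_add_distr_l; lia).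
Qed.


Lemma Sl_ne : Sl <> nil.
Proof. intro E. rewrite E in Hlen. simpl in Hlen. lia. Qed.

Lemma one_side O r k (sg : R) : (sg = 1 \/ sg = -1) -> 0 <= r ->
  (forall p, In p Sl -> dist2 O p <= r * r) ->
  (forall (c : point) (r' : R), 0 <= r' -> (forall p, In p Sl -> dist2 c p <= r' * r') -> r <= r') ->
  ~ In O Sl -> Hf k O = 0 ->
  ~ (exists p, In p Sl /\ Hf k p = 0 /\ sg * (ze k p - ze k O) > 0 /\ (ze k p - ze k O) * (ze k p - ze k O) = r * r) ->
  False.
Proof.
  intros Hsg Hr Hcov Hmin HnO H0 Hno.
  set (z := ze k O) in *.
  destruct (fin_eps Sl (fun p e => Hf k p > 0 -> Hf k p - sg * e * (ze k p - z) > 0)) as (g & Hg & Hge).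
  { intros p Hp. destruct (Rlt_dec 0 (Hf k p)) as [P|P].
    - exists (Hf k p / (Rabs (ze k p - z) + 1)). split.
      { apply Rdiv_lt_0_compat; auto. pose proof (Rabs_pos (ze k p - z)); lra. }
      intros e He _. 
      assert (e * (Rabs (ze k p - z) + 1) <= Hf k p).
      { destruct He as [_ He]. apply (Rmult_le_compat_r (Rabs (ze k p - z) + 1)) in He; [|pose proof (Rabs_pos (ze k p - z)); lra].
        unfold Rdiv in He. rewrite Rmult_assoc, Rinv_l in He by (pose proof (Rabs_pos (ze k p - z)); lra). lra. }
      assert (sg * (ze k p - z) <= Rabs (ze k p - z)).
      { destruct Hsg as [-> | ->]. rewrite Rmult_1_l; apply RRle_abs.
        replace (-1 * (ze k p - z)) with (- (ze k p - z)) by ring. rewrite <- Rabs_Ropp. apply RRle_abs. }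
      assert (e * (sg * (ze k p - z)) <= e * Rabs (ze k p - z)) by (apply Rmult_le_compat_l; lra).
      nra.
    - exists 1. split; [lra|]. intros e _ Hc. lra. }
  set (d1 := - cos (beta k) + sg * g * sin (beta k)).
  set (d2 := - sin (beta k) - sg * g * cos (beta k)).
  apply (PL Sl O r d1 d2 Hr Sl_ne Hcov Hmin).
  intros p Hp.
  assert (Ed : d1 * (fst p - fst O) + d2 * (snd p - snd O) = Hf k p - Hf k O - sg * g * (ze k p - z)).
  { unfold d1, d2, z, Hf, ze. ring. }
  rewrite Ed, H0.
  pose proof (inK_S p Hp k) as HK.
  destruct (Rlt_dec 0 (Hf k p)) as [P|P].
  - right. specialize (Hge g ltac:(lra) p Hp P). lra.
  - assert (Hz : Hf k p = 0) by lra.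
    assert (Hxi : xi k p = xi k O) by (rewrite !Hf_xi in Hz, H0; lra).
    assert (Hd : dist2 O p = (ze k p - z) * (ze k p - z)).
    { rewrite (dist_frame k). rewrite Hxi. fold z. ring. }
    destruct (Rtotal_order (sg * (ze k p - z)) 0) as [N|[E|Pz]].
    + right. rewrite Hz. nra.
    + exfalso. assert (ze k p = z).
      { destruct Hsg as [-> | ->]; lra. }
      apply HnO. rewrite <- (frame_eq k p O Hxi H). auto.
    + left. rewrite Hd. pose proof (Hcov p Hp) as Hc. rewrite Hd in Hc. destruct Hc as [Hc|Hc]; auto.
      exfalso. apply Hno. exists p. repeat split; auto.
Qed.

Lemma O_int O : is_SED_center Sl O -> ~ In O Sl -> forall k, Hf k O > 0.
Proof.
  intros (r & Hr & Hcov & Hmin) HnO k.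
  destruct (Rtotal_order (Hf k O) 0) as [Hlt|[Heq|Hgt]]; [exfalso|exfalso|auto].
  - apply (PL Sl O r (- cos (beta k)) (- sin (beta k)) Hr Sl_ne Hcov Hmin).
    intros p Hp. right.
    assert (E : - cos (beta k) * (fst p - fst O) + - sin (beta k) * (snd p - snd O) = Hf k p - Hf k O)
      by (unfold Hf; ring).
    rewrite E. pose proof (inK_S p Hp k). lra.
  - set (z := ze k O).
    destruct (classic (exists p, In p Sl /\ Hf k p = 0 /\ 1 * (ze k p - z) > 0 /\ (ze k p - z) * (ze k p - z) = r * r)) as [TA|TA];
      [|apply (one_side O r k 1); auto].
    destruct (classic (exists p, In p Sl /\ Hf k p = 0 /\ -1 * (ze k p - z) > 0 /\ (ze k p - z) * (ze k p - z) = r * r)) as [TB|TB];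
      [|apply (one_side O r k (-1)); auto].
    destruct TA as (pa & Ina & Za & Pa & Ea).
    destruct TB as (pb & Inb & Zb & Pb & Eb).
    assert (Ha : ze k pa - z = r) by nra.
    assert (Hb : z - ze k pb = r) by nra.
    destruct (ze_bound k pa Za (inK_S pa Ina (S k)) (inK_S pa Ina (k + n - 1))) as [_ A1].
    destruct (ze_bound k pb Zb (inK_S pb Inb (S k)) (inK_S pb Inb (k + n - 1))) as [B1 _].
    destruct (far_point k) as (j & x & Inx & Ex & T1 & T2).
    assert (Hxi : xi k x <= Rad * cos (3 * th)).
    { destruct (seg_aff _ _ _ Ex) as (t & Ht & Hx). rewrite (Hx _ (xi_affine k)).
      rewrite !xi_vtx. pose proof (VL3 _ T1). pose proof (VL3 _ T2).
      assert (Rad * cos ((2 * IZR (Z.of_nat j - Z.of_nat k) - 1) * th) <= Rad * cos (3 * th)) by (apply Rmult_le_compat_l; lra).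
      assert (Rad * cos ((2 * IZR (Z.of_nat (S j) - Z.of_nat k) - 1) * th) <= Rad * cos (3 * th)) by (apply Rmult_le_compat_l; lra).
      nra. }
    assert (Hnorm : Rad * Rad * (cos th * cos th) <= xi k x * xi k x + ze k x * ze k x).
    { destruct (onE_K j x Ex) as [_ Z0]. rewrite Hf_xi in Z0.
      assert (xi j x = Rad * cos th) by lra.
      pose proof (frame_norm j x). pose proof (frame_norm k x).
      assert (0 <= ze j x ^ 2) by apply pow2_ge_0. nra. }
    pose proof (Hcov x Inx) as Hc.
    rewrite (dist_frame k) in Hc.
    assert (xi k O = Rad * cos th) by (rewrite Hf_xi in Heq; lra).
    rewrite H in Hc. fold z in Hc.
    pose proof (sin2_cos2 th). unfold Rsqr in H0.
    pose proof (num_key Rad (cos th) (sin th) (cos (3 * th)) (xi k x) (ze k x) z r HR c_ge s_pos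
      ltac:(lra) (cos3 th) Hxi Hnorm Hr ltac:(lra) ltac:(lra)).
    lra.
Qed.

End SED.

End Count.
End Poly.

Theorem lemma5p9 (S : list point) (O C : point) (Rad phi : R) :
  NoDup S ->
  (4 < length S)%nat ->
  is_SED_center S O ->
  ~ In O S ->
  supporting_polygon S C Rad phi ->
  forall a b c, In a S -> In b S -> In c S ->
    (ccw_between O a b c <-> ccw_between C a b c).
Proof.
  intros _ Hn HSED HnO [HR Hsup] a b c Ha Hb Hc.
  set (n := length S) in *.
  assert (Hsup' : forall k, (k < n)%nat -> Fe n C Rad phi S k \/ Fe n C Rad phi S (Datatypes.S k)).
  { intros k Hk. destruct (Hsup k Hk) as [[F _]|[F _]]; [left|right]; exact F. }
  assert (Hall : forall x, In x S -> exists j, onE n C Rad phi j x).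
  { intros x Hx. exact (all_on_edge n Hn C Rad phi HR S eq_refl Hsup' x Hx). }
  set (h := Hf n C Rad phi).
  assert (Haff : forall k, affine (h k)) by (intro k; apply Hf_affine).
  assert (HB : forall p, In p S -> onB h p).
  { intros p Hp. destruct (Hall p Hp) as [j Hj]. destruct (onE_K n Hn C Rad phi HR j p Hj) as [K Z].
    split; [exact K|exists j; exact Z]. }
  assert (HC : intK h C).
  { intro k. unfold h, Hf. pose proof (c_ge n Hn). replace (fst C - fst C) with 0 by ring.
    replace (snd C - snd C) with 0 by ring. nra. }
  assert (HO : intK h O).
  { intro k. exact (O_int n Hn C Rad phi HR S eq_refl Hall Hsup' O HSED HnO k). }
  rewrite !ccw_G.
  apply (G_invariant h Haff); auto.
Qed.
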